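(* Let $f\in C^1([0,1],\mathbb{R})$ satisfy $f(0)=f(1)=0$, $f(s)>0$ for all $s\in(0,1)$, $f'(1)<0$, and suppose there exist $s_0\in(0,1)$, $K\ge 0$, $\alpha>0$ and $r>0$ such that $f(s)\le r\frac{s}{(1+|\ln s|)^\alpha}$ for all $s\in(0,1)$ and $f(s)\ge r\frac{s}{(1+|\ln s|)^\alpha}(1-Ks)$ for all $s\in(0,s_0]$. Let $u_0:\mathbb{R}\to[0,1]$ be uniformly continuous with $u_0>0$ on $\mathbb{R}$, $\liminf_{x\to-\infty}u_0>0$, $\lim_{x\to+\infty}u_0=0$, of class $C^2$ and nonincreasing on $[\xi_0,+\infty)$ for some $\xi_0>0$, and such that $\varphi_0:=-\ln u_0$ satisfies $\varphi_0'=o(\varphi_0^{-\alpha})$ and $\varphi_0''=o(\varphi_0')$ as $x\to+\infty$. Let $\varepsilon>0$ and $\rho$ with $\max\{r-\frac{\varepsilon}{2},\frac34 r\}<\rho<r$. Define $$w(t,x):=\exp\Big\{1-\big[(1+\varphi_0(x))^{\alpha+1}-\rho(\alpha+1)t\big]^{\frac{1}{\alpha+1}}\Big\},\qquad x_0(t):=\sup\Big\{x: u_0(x)=\exp\big(1-(\rho(\alpha+1)t+1)^{\frac{1}{\alpha+1}}\big)\Big\},$$ $\xi_1:=\max\{\xi_0,x_0(0)\}$, $\zeta:=\inf_{x<\xi_1}u_0(x)\in(0,1]$, and for $M\ge \max\{\frac{1}{2\zeta},\frac{1}{4s_0}\}$ let $g(y):=y(1-My)$, $$x_M(t):=\sup\Big\{x\in\mathbb{R}: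 u_0(x)=\exp\Big\{1-\big((1+\ln(2M))^{\alpha+1}+\rho(\alpha+1)t\big)^{\frac{1}{\alpha+1}}\Big\}\Big\},$$ and $v(t,x):=\frac{1}{4M}$ for $x\le x_M(t)$, $v(t,x):=g(w(t,x))$ for $x>x_M(t)$. Then there exists $M$ large enough such that $v$ is a subsolution of $u_t=u_{xx}+f(u)$ for all $t>0$ and $x\in\mathbb{R}$, i.e. $v_t-v_{xx}-f(v)\le 0$ on each of the regions $\{x\le x_M(t)\}$ and $\{x>x_M(t)\}$.
   Context: One has $w(t,x_M(t))=\frac{1}{2M}$ and $w(t,x)<\frac{1}{2M}$ for $x>x_M(t)$, so $v$ is continuous and $0<v\le s_0$. *)

(* Defs.v *)
From Stdlib Require Import Reals.
From Coquelicot Require Import Coquelicot.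
Open Scope R_scope.

(* f is C^1 on [0,1] with derivative f' : one-sided derivatives at the
   endpoints (difference quotients taken within [0,1]) and f' continuous
   on [0,1] (relative to [0,1]). *)
Definition C1_on_01 (f f' : R -> R) : Prop :=
  (forall s, 0 <= s <= 1 ->
     filterlim (fun h => (f (s + h) - f s) / h)
       (within (fun h => h <> 0 /\ 0 <= s + h <= 1) (locally 0))
       (locally (f' s))) /\
  (forall s, 0 <= s <= 1 ->
     filterlim f' (within (fun y => 0 <= y <= 1) (locally s)) (locally (f' s))).

Definition unif_continuous (u : R -> R) : Prop :=
  forall e, 0 < e -> exists d, 0 < d /\
    forall x y, Rabs (x - y) < d -> Rabs (u x - u y) < e.

Definition C2_on_right (u : R -> R) (a : R) : Prop :=
  forall x, a < x ->
    ex_derive u x /\ ex_derive (Derive u) x /\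
    continuous (Derive (Derive u)) x /\
    locally x (fun y => ex_derive u y /\ ex_derive (Derive u) y).

Definition little_o_pinfty (a b : R -> R) : Prop :=
  forall e, 0 < e -> exists X, forall x, X <= x -> Rabs (a x) <= e * Rabs (b x).

Definition phi0 (u0 : R -> R) (x : R) : R := - ln (u0 x).

Definition w_fun (u0 : R -> R) (alpha rho t x : R) : R :=
  exp (1 - Rpower (Rpower (1 + phi0 u0 x) (alpha + 1) - rho * (alpha + 1) * t)
                  (1 / (alpha + 1))).

Definition x0_fun (u0 : R -> R) (alpha rho t : R) : Rbar :=
  Lub_Rbar (fun x => u0 x = exp (1 - Rpower (rho * (alpha + 1) * t + 1) (1 / (alpha + 1)))).

(* xi1 = max{xi0, x0(0)}  (x0(0) = -oo if the level set is empty) *)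
Definition xi1 (u0 : R -> R) (alpha rho xi0 : R) : R :=
  match x0_fun u0 alpha rho 0 with
  | Finite a => Rmax xi0 a
  | m_infty => xi0
  | p_infty => real p_infty
  end.

Definition zeta (u0 : R -> R) (alpha rho xi0 : R) : R :=
  real (Glb_Rbar (fun y => exists x, x < xi1 u0 alpha rho xi0 /\ y = u0 x)).

Definition g_fun (M y : R) : R := y * (1 - M * y).

Definition xM_fun (u0 : R -> R) (alpha rho M t : R) : R :=
  real (Lub_Rbar (fun x => u0 x =
    exp (1 - Rpower (Rpower (1 + ln (2 * M)) (alpha + 1) + rho * (alpha + 1) * t)
                    (1 / (alpha + 1))))).

Definition v_right (u0 : R -> R) (alpha rho M t x : R) : R :=
  g_fun M (w_fun u0 alpha rho t x).

Definition v_fun (u0 : R -> R) (alpha rho M t x : R) : R :=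
  if Rle_dec x (xM_fun u0 alpha rho M t) then 1 / (4 * M)
  else v_right u0 alpha rho M t x.

(* Main.v *)
Require Import Defs.
From Stdlib Require Import Reals.
From Coquelicot Require Import Coquelicot.
From Stdlib Require Import Lra Psatz.
Open Scope R_scope.

Definition Ap (a c p : R) := Rpower (1+p) (a+1) - c.
Definition Psi (a c p : R) := Rpower (Ap a c p) (1/(a+1)).
Definition Wp (a c p : R) := exp (1 - Psi a c p).
Definition Fv (a c M p : R) := g_fun M (Wp a c p).
Definition Ee (a c p : R) := exp ((1/(a+1) - 1) * ln (Ap a c p)).
Definition Ps1 (a c p : R) := Ee a c p * Rpower (1+p) a.
Definition Ps2 (a c p : R) := Ps1 a c p * a / (1+p) * (-c) / Ap a c p.
Definition F1 (a c M p : R) := - (Wp a c p - 2*M*(Wp a c p)^2) * Ps1 a c p.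
Definition F2 (a c M p : R) :=
  Wp a c p * (1 - 4*M*Wp a c p) * (Ps1 a c p)^2
  - Wp a c p * (1 - 2*M*Wp a c p) * Ps2 a c p.

Lemma Rpower_split (x y z : R) : 0 < x -> Rpower x (y + z) = Rpower x y * Rpower x z.
Proof. intros; unfold Rpower; rewrite <- exp_plus; f_equal; ring. Qed.

Lemma d_Ap a c p : 0 < 1+p -> 0 < a ->
  is_derive (Ap a c) p ((a+1) * Rpower (1+p) a).
Proof.
  intros H Ha. unfold Ap, Rpower.
  auto_derive. lra.
  replace (exp (a * ln (1+p))) with (exp ((a+1) * ln (1+p)) / (1+p)).
  field. lra.
  replace ((a+1) * ln (1+p)) with (a * ln (1+p) + ln (1+p)) by ring.
  rewrite exp_plus, exp_ln by lra. field. lra.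
Qed.


Lemma d_Psi a c p : 0 < 1+p -> 0 < a -> 0 < Ap a c p ->
  is_derive (Psi a c) p (Ps1 a c p).
Proof.
  intros H Ha HA. 
  assert (D: Derive (fun x => Ap a c x) p = (a+1) * Rpower (1+p) a)
    by (apply is_derive_unique; apply d_Ap; auto).
  unfold Psi, Rpower at 1.
  auto_derive. split; [|split;auto]. eexists; apply d_Ap; auto.
  rewrite D. unfold Ps1, Ee.
  replace ((1 / (a + 1) - 1) * ln (Ap a c p)) with (1 / (a + 1) * ln (Ap a c p) + - ln (Ap a c p)) by ring.
  rewrite exp_plus, exp_Ropp, exp_ln by lra. field. lra.
Qed.

Lemma Rpower_S x a : 0 < x -> Rpower x (a+1) = Rpower x a * x.
Proof. intro; rewrite Rpower_split by auto. rewrite Rpower_1 by auto. ring. Qed.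

Lemma d_Ps1 a c p : 0 < 1+p -> 0 < a -> 0 < Ap a c p ->
  is_derive (Ps1 a c) p (Ps2 a c p).
Proof.
  intros H Ha HA. 
  assert (D: Derive (fun x => Ap a c x) p = (a+1) * Rpower (1+p) a)
    by (apply is_derive_unique; apply d_Ap; auto).
  unfold Ps1, Ee, Rpower.
  auto_derive. split; [|split;[|split]]; auto. eexists; apply d_Ap; auto.
  rewrite D. unfold Ps2, Ps1, Ee.
  assert (HAe: Ap a c p = Rpower (1+p) a * (1+p) - c) by (unfold Ap; rewrite Rpower_S; lra).
  unfold Rpower in HAe |- *.
  set (T := exp (a * ln (1 + p))) in *.
  set (EE := exp ((1 / (a + 1) - 1) * ln (Ap a c p))).
  set (A := Ap a c p) in *. clearbody A.
  replace c with (T * (1+p) - A) by (rewrite HAe; ring).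
  field. lra.
Qed.

Lemma d_Wp a c p : 0 < 1+p -> 0 < a -> 0 < Ap a c p ->
  is_derive (Wp a c) p (- Wp a c p * Ps1 a c p).
Proof.
  intros H Ha HA.
  assert (D: Derive (fun x => Psi a c x) p = Ps1 a c p)
    by (apply is_derive_unique; apply d_Psi; auto).
  unfold Wp at 1. auto_derive. eexists; apply d_Psi; auto.
  rewrite D. unfold Wp, Rminus. ring.
Qed.

Lemma d_Fv a c M p : 0 < 1+p -> 0 < a -> 0 < Ap a c p ->
  is_derive (Fv a c M) p (F1 a c M p).
Proof.
  intros H Ha HA.
  assert (D: Derive (fun x => Wp a c x) p = - Wp a c p * Ps1 a c p)
    by (apply is_derive_unique; apply d_Wp; auto).
  apply is_derive_ext with (f := fun p => Wp a c p * (1 - M * Wp a c p)). intro; reflexivity.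
  auto_derive. assert (ex_derive (fun x => Wp a c x) p) by (eexists; apply d_Wp; auto). tauto.
  rewrite D. unfold F1. ring.
Qed.

Lemma d_F1 a c M p : 0 < 1+p -> 0 < a -> 0 < Ap a c p ->
  is_derive (F1 a c M) p (F2 a c M p).
Proof.
  intros H Ha HA.
  assert (D: Derive (fun x => Wp a c x) p = - Wp a c p * Ps1 a c p)
    by (apply is_derive_unique; apply d_Wp; auto).
  assert (D2: Derive (fun x => Ps1 a c x) p = Ps2 a c p)
    by (apply is_derive_unique; apply d_Ps1; auto).
  assert (ex_derive (fun x => Wp a c x) p) by (eexists; apply d_Wp; auto).
  assert (ex_derive (fun x => Ps1 a c x) p) by (eexists; apply d_Ps1; auto).
  unfold F1 at 1. auto_derive. tauto.
  rewrite D, D2. unfold F2. ring.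
Qed.

Lemma dc_Psi a c p : 0 < a -> 0 < Ap a c p ->
  is_derive (fun c => Psi a c p) c (- (1/(a+1)) * Ee a c p).
Proof.
  intros Ha HA. unfold Psi, Ee. unfold Ap at 1. unfold Rpower at 1.
  auto_derive. unfold Ap in HA; lra.
  replace (Rpower (1 + p) (a + 1) + - c) with (Ap a c p) by (unfold Ap; ring).
  replace ((1 / (a + 1) - 1) * ln (Ap a c p)) with (1 / (a + 1) * ln (Ap a c p) + - ln (Ap a c p)) by ring.
  rewrite exp_plus, exp_Ropp, exp_ln by lra. field. lra.
Qed.

Lemma dc_Fv a c M p : 0 < a -> 0 < Ap a c p ->
  is_derive (fun c => Fv a c M p) c ((1 - 2*M*Wp a c p) * Wp a c p * (1/(a+1)) * Ee a c p).
Proof.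
  intros Ha HA.
  assert (D: Derive (fun c => Psi a c p) c = - (1/(a+1)) * Ee a c p)
    by (apply is_derive_unique; apply dc_Psi; auto).
  assert (ex_derive (fun c => Psi a c p) c) by (eexists; apply dc_Psi; auto).
  unfold Fv, g_fun, Wp. auto_derive. tauto.
  rewrite D. unfold Rminus. ring.
Qed.

Lemma d_time a rho M p s : 0 < a -> 0 < Ap a (rho*(a+1)*s) p ->
  is_derive (fun s => Fv a (rho*(a+1)*s) M p) s
    ((1 - 2*M*Wp a (rho*(a+1)*s) p) * Wp a (rho*(a+1)*s) p * rho * Ee a (rho*(a+1)*s) p).
Proof.
  intros Ha HA.
  assert (H1 := dc_Fv a (rho*(a+1)*s) M p Ha HA).
  assert (H2 : is_derive (fun s => rho*(a+1)*s) s (rho*(a+1))) by (auto_derive; try ring; auto).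
  pose proof (is_derive_comp _ _ s _ _ H1 H2) as H3.
  match type of H3 with is_derive _ _ ?v => replace (_ * _ * rho * _) with v end.
  exact H3.
  change scal with (@mult R_Ring). simpl. unfold mult; simpl. field. lra.
Qed.

Lemma comp_x a c M (phi : R -> R) x d2 : 0 < a ->
  locally x (fun y => ex_derive phi y /\ 0 < 1 + phi y /\ 0 < Ap a c (phi y)) ->
  is_derive (Derive phi) x d2 ->
  locally x (fun y => is_derive (fun z => Fv a c M (phi z)) y (F1 a c M (phi y) * Derive phi y)) /\
  is_derive (Derive (fun z => Fv a c M (phi z))) x
     (F2 a c M (phi x) * (Derive phi x)^2 + F1 a c M (phi x) * d2).
Proof.
  intros Ha Hloc Hd2.
  assert (L1 : locally x (fun y => is_derive (fun z => Fv a c M (phi z)) y (F1 a c M (phi y) * Derive phi y))).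
  { eapply filter_imp; [|exact Hloc]. intros y [Hy1 [Hy2 Hy3]].
    pose proof (is_derive_comp (Fv a c M) phi y _ _ (d_Fv a c M (phi y) Hy2 Ha Hy3) (Derive_correct _ _ Hy1)) as H3.
    match type of H3 with is_derive _ _ ?v => replace (_ * _) with v end.
    exact H3. change scal with (@mult R_Ring). simpl. unfold mult; simpl. ring. }
  split; auto.
  assert (Hx := locally_singleton _ _ Hloc). destruct Hx as [Hx1 [Hx2 Hx3]].
  eapply is_derive_ext_loc.
  { eapply filter_imp; [|exact L1]. intros y Hy. simpl. symmetry. apply is_derive_unique. exact Hy. }
  pose proof (is_derive_comp (F1 a c M) phi x _ _ (d_F1 a c M (phi x) Hx2 Ha Hx3) (Derive_correct _ _ Hx1)) as H3.
  assert (Hc : forall n m : R_AbsRing, mult n m = mult m n) by (intros; apply Rmult_comm).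
  pose proof (is_derive_mult _ _ x _ _ H3 Hd2 Hc) as H4.
  match type of H4 with is_derive _ _ ?v => replace (_ + _) with v end.
  apply H4.
  change scal with (@mult R_Ring). simpl. unfold plus, mult; simpl. ring.
Qed.


Lemma ln_1p_le u : 0 <= u -> ln (1 + u) <= u.
Proof.
  intro. destruct (Req_dec u 0). subst. rewrite Rplus_0_r, ln_1. lra.
  pose proof (exp_ineq1 u H0).
  rewrite <- (ln_exp u) at 2. apply ln_le; lra.
Qed.

Lemma exp_ge_1m z : 1 - z <= exp (- z).
Proof.
  destruct (Req_dec z 0). subst. rewrite Ropp_0, exp_0. lra.
  assert (-z <> 0) by lra. pose proof (exp_ineq1 (-z) H0). lra.
Qed.

Lemma exp_le_mono x y : x <= y -> exp x <= exp y.
Proof. intro H; destruct H as [H|H]. left; apply exp_increasing; auto. subst; lra. Qed.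

Lemma Ee_alt a c p : 0 < a -> 0 < Ap a c p -> Ee a c p = exp (- a * ln (Psi a c p)).
Proof.
  intros Ha HA. unfold Ee, Psi, Rpower. rewrite ln_exp. f_equal. field. lra.
Qed.

Lemma main_ineq (f : R -> R) a c M p d1 d2 r rho K s0 dl kp :
  0 < a -> 0 <= c -> 2 <= M -> 1 <= p -> 0 < Ap a c p ->
  1 + ln (2*M) <= Psi a c p ->
  Rabs d1 <= dl * Rabs (Rpower p (- a)) ->
  Rabs d2 <= dl * Rabs d1 ->
  (forall s, 0 < s <= s0 ->
     r * (s / Rpower (1 + Rabs (ln s)) a) * (1 - K * s) <= f s) ->
  1 / (4*M) <= s0 -> 0 <= K ->
  0 < rho -> rho < r ->
  kp = (r - rho) / (8 * r) ->
  K / (2*M) <= kp -> a * ln 2 / (1 + ln (2*M)) <= kp ->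
  0 < dl <= 1 -> dl * ((Rpower 2 a)^2 + Rpower 2 a) <= (r - rho) / 4 ->
  (1 - 2*M*Wp a c p) * Wp a c p * rho * Ee a c p
  - (F2 a c M p * d1^2 + F1 a c M p * d2)
  - f (g_fun M (Wp a c p)) <= 0.
Proof.
  intros Ha Hc HM Hp HA Hpsi Hd1 Hd2 Hflo Hs0 HK Hrho Hrr Hkp HK2 Hla Hdl Hdl2.
  set (psi := Psi a c p) in *.
  set (W := Wp a c p).
  set (E := Ee a c p).
  set (L := 1 + ln (2*M)) in *.
  assert (Hln2M : 1 <= ln (2*M)).
  { rewrite <- ln_exp at 1. apply ln_le. apply exp_pos.
    pose proof exp_le_3. lra. }
  assert (HL : 2 <= L) by (unfold L; lra).
  assert (HE : E = exp (- a * ln psi)) by (apply Ee_alt; auto).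
  assert (Hlnpsi : 0 <= ln psi) by (rewrite <- ln_1; apply ln_le; lra).
  assert (HE0 : 0 < E) by (rewrite HE; apply exp_pos).
  assert (HE1 : E <= 1).
  { rewrite HE, <- exp_0. apply exp_le_mono. nra. }
  assert (HW0 : 0 < W) by apply exp_pos.
  assert (HWM : W <= 1 / (2*M)).
  { unfold W, Wp. fold psi.
    replace (1 / (2*M)) with (exp (1 - L)).
    apply exp_le_mono; lra.
    unfold L. replace (1 - (1 + ln (2*M))) with (- ln (2*M)) by ring.
    rewrite exp_Ropp, exp_ln by lra. field. lra. }
  set (y := M * W).
  assert (Hy0 : 0 < y) by (unfold y; nra).
  assert (Hy1 : y <= 1/2).
  { unfold y. apply Rmult_le_compat_l with (r := M) in HWM; [|lra].
    replace (M * (1 / (2*M))) with (1/2) in HWM by (field; lra). lra. }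
  assert (HP1 : Rabs (Ps1 a c p * d1) <= dl * Rpower 2 a * E).
  { unfold Ps1. fold E.
    rewrite Rabs_mult, Rabs_mult, (Rabs_right E), (Rabs_right (Rpower (1+p) a)) by
      (left; try apply exp_pos; auto).
    rewrite (Rabs_right (Rpower p (-a))) in Hd1 by (left; apply exp_pos).
    assert (Hq : Rpower (1+p) a * Rpower p (-a) <= Rpower 2 a).
    { unfold Rpower. rewrite <- exp_plus.
      apply exp_le_mono.
      assert (ln (1+p) <= ln 2 + ln p).
      { rewrite <- ln_mult by lra. apply ln_le; lra. }
      nra. }
    assert (0 < Rpower (1+p) a) by apply exp_pos.
    assert (0 <= Rabs d1) by apply Rabs_pos.
    assert (Rpower (1+p) a * Rabs d1 <= dl * Rpower 2 a).
    { apply Rle_trans with (Rpower (1+p) a * (dl * Rpower p (-a))).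
      apply Rmult_le_compat_l; lra. nra. }
    nra. }
  assert (HP2 : Ps2 a c p <= 0).
  { unfold Ps2. assert (0 <= Ps1 a c p).
    { unfold Ps1. left. apply Rmult_lt_0_compat; apply exp_pos. }
    unfold Rdiv. 
    assert (0 <= Ps1 a c p * a * / (1 + p)).
    { apply Rmult_le_pos. nra. left; apply Rinv_0_lt_compat; lra. }
    assert (0 < / Ap a c p) by (apply Rinv_0_lt_compat; lra).
    set (X := Ps1 a c p * a * / (1 + p)) in *.
    replace (X * - c * / Ap a c p) with (- (X * c * / Ap a c p)) by ring.
    assert (0 <= X * c * / Ap a c p) by (apply Rmult_le_pos; [apply Rmult_le_pos|]; lra).
    lra. }
  set (s := g_fun M W).
  assert (Hs : s = W * (1 - y)) by (unfold s, g_fun, y; ring).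
  assert (Hs0' : 0 < s <= s0).
  { split. rewrite Hs; nra.
    apply Rle_trans with (1 / (4*M)); auto.
    rewrite Hs. unfold y. apply Rmult_le_reg_l with (4*M). lra.
    replace (4 * M * (1 / (4*M))) with 1 by (field; lra).
    replace (4 * M * (W * (1 - M * W))) with (1 - (2*M*W - 1)^2) by ring.
    pose proof (pow2_ge_0 (2*M*W-1)). lra. }
  assert (Hfs := Hflo s Hs0').
  assert (Hlns : Rabs (ln s) <= psi - 1 + ln 2).
  { assert (ln s = 1 - psi + ln (1 - y)).
    { rewrite Hs, ln_mult by lra. unfold W, Wp. rewrite ln_exp. fold psi. ring. }
    assert (Hq : 1/(2*M) < 1).
    { apply Rmult_lt_reg_l with (2*M). lra. replace (2*M*(1/(2*M))) with 1 by (field; lra). lra. }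
    assert (ln s < 0). { rewrite <- ln_1. apply ln_increasing. lra. rewrite Hs.
      assert (W * (1 - y) <= W * 1) by (apply Rmult_le_compat_l; lra). lra. }
    rewrite Rabs_left by lra.
    assert (- ln 2 <= ln (1 - y)).
    { rewrite <- ln_Rinv by lra. apply ln_le. apply Rinv_0_lt_compat; lra.
      replace (/ 2) with (1/2) by field. lra. }
    lra. }
  assert (Hden : Rpower (1 + Rabs (ln s)) a <= exp (a * ln psi) * exp (a * ln 2 / psi)).
  { apply Rle_trans with (Rpower (psi + ln 2) a).
    apply Rle_Rpower_l. lra. split. pose proof (Rabs_pos (ln s)); lra. lra.
    unfold Rpower. rewrite <- exp_plus.
    assert (ln (psi + ln 2) <= ln psi + ln 2 / psi).
    { replace (psi + ln 2) with (psi * (1 + ln 2 / psi)) by (field; lra).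
      rewrite ln_mult. apply Rplus_le_compat_l. apply ln_1p_le.
      apply Rmult_le_pos. pose proof ln_lt_2; lra. left; apply Rinv_0_lt_compat; lra.
      lra. assert (0 < ln 2 / psi). apply Rmult_lt_0_compat. pose proof ln_lt_2; lra.
      apply Rinv_0_lt_compat; lra. lra. }
    apply exp_le_mono.
    unfold Rdiv in *. nra. }
  assert (Hkp0 : 0 < kp) by (rewrite Hkp; apply Rdiv_lt_0_compat; lra).
  assert (Hkp1 : kp <= 1/8).
  { rewrite Hkp. apply Rmult_le_reg_l with (8*r). lra.
    replace (8 * r * ((r - rho) / (8 * r))) with (r - rho) by (field; lra). lra. }
  assert (Hinv : E * (1 - kp) <= 1 / Rpower (1 + Rabs (ln s)) a).
  { assert (0 < Rpower (1 + Rabs (ln s)) a) by apply exp_pos.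
    apply Rle_trans with (1 / (exp (a * ln psi) * exp (a * ln 2 / psi))).
    2: { apply Rmult_le_compat_l. lra. apply Rinv_le_contravar; auto. }
    rewrite HE.
    replace (1 / (exp (a * ln psi) * exp (a * ln 2 / psi))) with
      (exp (- a * ln psi) * exp (- (a * ln 2 / psi))).
    2: { rewrite exp_Ropp. replace (- a * ln psi) with (- (a * ln psi)) by ring.
         rewrite exp_Ropp. field. split; apply Rgt_not_eq, exp_pos. }
    apply Rmult_le_compat_l. left; apply exp_pos.
    apply Rle_trans with (1 - a * ln 2 / psi); [|apply exp_ge_1m].
    assert (a * ln 2 / psi <= a * ln 2 / L).
    { unfold Rdiv. apply Rmult_le_compat_l. pose proof ln_lt_2; nra.
      apply Rinv_le_contravar; lra. }
    lra. }
  assert (HKs : 1 - kp <= 1 - K * s).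
  { assert (K * s <= K / (2*M)).
    { unfold Rdiv. apply Rmult_le_compat_l; auto.
      apply Rle_trans with W. rewrite Hs; nra. rewrite <- (Rmult_1_l (/ (2*M))). exact HWM. }
    lra. }
  assert (Hf : r * s * E * (1 - kp) * (1 - kp) <= f s).
  { eapply Rle_trans; [|exact Hfs].
    unfold Rdiv in Hinv |- *. rewrite Rmult_1_l in Hinv.
    assert (0 < r * s) by nra.
    assert (0 <= E * (1 - kp)) by nra.
    replace (r * (s * / Rpower (1 + Rabs (ln s)) a) * (1 - K * s)) with
      ((r * s) * (/ Rpower (1 + Rabs (ln s)) a) * (1 - K * s)) by ring.
    apply Rmult_le_compat. nra. lra.
    replace (r * s * E * (1 - kp)) with ((r*s) * (E * (1 - kp))) by ring.
    apply Rmult_le_compat_l; lra. lra. }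
  set (P := Ps1 a c p * d1) in *.
  set (T2a := Rpower 2 a) in *.
  assert (HT2 : 0 < T2a) by apply exp_pos.
  assert (HPa : Rabs P <= dl * T2a * E) by exact HP1.
  assert (B1 : P^2 <= dl * T2a^2 * E).
  { assert (P^2 = Rabs P * Rabs P) by (rewrite <- Rabs_mult; simpl; rewrite Rmult_1_r; symmetry; apply Rabs_right; nra).
    assert (0 <= Rabs P) by apply Rabs_pos.
    assert (Rabs P * Rabs P <= (dl * T2a * E) * (dl * T2a * E)) by (apply Rmult_le_compat; lra).
    assert ((dl * T2a * E) * (dl * T2a * E) = (dl*E) * (dl * T2a^2 * E)) by ring.
    assert (dl * E <= 1) by nra.
    assert (0 <= dl * T2a^2 * E) by (apply Rmult_le_pos; [apply Rmult_le_pos|]; nra).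
    nra. }
  assert (B3 : Ps1 a c p * d2 <= dl * T2a * E).
  { apply Rle_trans with (Rabs (Ps1 a c p * d2)). apply Rle_abs.
    rewrite Rabs_mult.
    assert (Rabs (Ps1 a c p) * Rabs d2 <= Rabs (Ps1 a c p) * (dl * Rabs d1))
      by (apply Rmult_le_compat_l; [apply Rabs_pos| auto]).
    assert (Rabs (Ps1 a c p) * (dl * Rabs d1) = dl * Rabs P) by (unfold P; rewrite Rabs_mult; ring).
    assert (dl * Rabs P <= dl * (dl * T2a * E)) by (apply Rmult_le_compat_l; lra).
    assert (dl * (dl * T2a * E) <= 1 * (dl * T2a * E)).
    { apply Rmult_le_compat_r. apply Rmult_le_pos; [apply Rmult_le_pos|]; lra. lra. }
    lra. }
  assert (B2 : Ps2 a c p * d1^2 <= 0).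
  { assert (0 <= d1^2) by apply pow2_ge_0. nra. }
  unfold F2, F1. change (Wp a c p) with W.
  replace ((1 - 2 * M * W) * W * rho * E - (
   (W * (1 - 4 * M * W) * Ps1 a c p ^ 2 - W * (1 - 2 * M * W) * Ps2 a c p) * d1 ^ 2 +
   - (W - 2 * M * W ^ 2) * Ps1 a c p * d2) - f s)
  with (W * ((1 - 2*y) * rho * E - (1 - 4*y) * P^2 + (1 - 2*y) * (Ps2 a c p * d1^2)
          + (1 - 2*y) * (Ps1 a c p * d2)) - f s) by (unfold P, y; ring).
  assert (C1 : - (1 - 4*y) * P^2 <= dl * T2a^2 * E).
  { assert (0 <= P^2) by apply pow2_ge_0. nra. }
  assert (C2 : (1 - 2*y) * (Ps2 a c p * d1^2) <= 0) by nra.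
  assert (C3 : (1 - 2*y) * (Ps1 a c p * d2) <= dl * T2a * E).
  { assert ((1 - 2*y) * (Ps1 a c p * d2) <= (1 - 2*y) * (dl * T2a * E)) by (apply Rmult_le_compat_l; lra).
    assert (0 <= dl * T2a * E) by (apply Rmult_le_pos; [apply Rmult_le_pos|]; lra).
    nra. }
  assert (C4 : dl * T2a^2 * E + dl * T2a * E <= (r - rho)/4 * E).
  { replace (dl * T2a^2 * E + dl * T2a * E) with ((dl * (T2a^2 + T2a)) * E) by ring.
    apply Rmult_le_compat_r; lra. }
  assert (C5 : (1 - 2*y) * rho * E + (r - rho)/4 * E <= r * (1 - y) * (1 - kp) * (1 - kp) * E).
  { replace ((1 - 2*y) * rho * E + (r - rho)/4 * E) with (((1 - 2*y) * rho + (r - rho)/4) * E) by ring.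
    apply Rmult_le_compat_r; [lra|].
    assert (r * (1 - kp) * (1 - kp) >= r - (r - rho)/4).
    { assert (r * (2*kp) = (r - rho)/4) by (rewrite Hkp; field; lra). nra. }
    nra. }
  assert (C6 : W * ((1 - 2*y) * rho * E - (1 - 4*y) * P^2 + (1 - 2*y) * (Ps2 a c p * d1^2)
          + (1 - 2*y) * (Ps1 a c p * d2)) <= W * (r * (1 - y) * (1 - kp) * (1 - kp) * E)).
  { apply Rmult_le_compat_l; lra. }
  assert (W * (r * (1 - y) * (1 - kp) * (1 - kp) * E) = r * s * E * (1 - kp) * (1 - kp)) by (rewrite Hs; ring).
  lra.
Qed.


Lemma uc_cont u : unif_continuous u -> continuity u.
Proof.
  intros H x. unfold continuity_pt, continue_in, limit1_in, limit_in.
  intros e He. destruct (H e He) as [d [Hd Hu]]. exists d; split; auto.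
  intros y [_ Hy]. unfold R_dist in *. simpl in *. unfold R_dist in *. apply Hu; auto.
Qed.

Lemma loc_gt a x : a < x -> locally x (fun y => a < y).
Proof.
  intro H. assert (Hp : 0 < x - a) by lra. exists (mkposreal _ Hp). intros y Hy.
  simpl in Hy. unfold ball in Hy; simpl in Hy. unfold AbsRing_ball, abs, minus, plus, opp in Hy; simpl in Hy.
  apply Rabs_lt_between in Hy. lra.
Qed.

Lemma level_sup (u : R -> R) (cc m X : R) : continuity u -> 0 < cc ->
  (forall y, y <= X -> m <= u y) -> cc < m ->
  (exists Y, forall y, Y <= y -> u y < cc) ->
  forall y, real (Lub_Rbar (fun x => u x = cc)) < y -> u y < cc /\ X < y.
Proof.
  intros Hc Hcc Hm Hcm [Y HY].
  set (Y' := Rmax Y (X+1)).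
  assert (HY1 : Y <= Y') by apply Rmax_l. assert (HY2 : X + 1 <= Y') by apply Rmax_r.
  assert (Hh : continuity (fun z => cc - u z)).
  { apply continuity_minus. apply continuity_const. intros a b; auto. auto. }
  assert (HX : m <= u X) by (apply Hm; lra).
  destruct (IVT (fun z => cc - u z) X Y' Hh) as [z0 [Hz0 Ez0]]; try lra.
  assert (HuY := HY Y' HY1). lra.
  assert (E0 : u z0 = cc) by lra.
  assert (Hub : forall z, u z = cc -> z < Y').
  { intros z Hz. destruct (Rlt_or_le z Y'); auto. assert (u z < cc) by (apply HY; lra). lra. }
  destruct (Lub_Rbar_correct (fun x => u x = cc)) as [Hl1 Hl2].
  assert (Hfin : exists l, Lub_Rbar (fun x => u x = cc) = Finite l).
  { destruct (Lub_Rbar (fun x => u x = cc)) eqn:Eq.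
    - eauto.
    - exfalso. assert (Rbar_le p_infty Y').
      { apply Hl2. intros z Hz. simpl. left. apply Hub; auto. }
      simpl in H; auto.
    - exfalso. specialize (Hl1 z0 E0). simpl in Hl1. auto. }
  destruct Hfin as [l Hl]. rewrite Hl in Hl1. simpl.
  intros y Hy. rewrite Hl in Hy. simpl in Hy.
  assert (Huy : u y < cc).
  { destruct (Rlt_or_le (u y) cc) as [H|H]; auto. exfalso.
    destruct H as [H|H].
    - destruct (Rlt_or_le y Y') as [Hy'|Hy'].
      + destruct (IVT (fun z => cc - u z) y Y' Hh Hy') as [z [Hz Ez]]. lra.
        assert (HuY := HY Y' HY1). lra.
        assert (Rbar_le z l) by (apply Hl1; lra). simpl in H0. lra.
      + assert (u y < cc) by (apply HY; lra). lra.
    - assert (Rbar_le y l) by (apply Hl1; lra). simpl in H0. lra. }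
  split; auto.
  destruct (Rlt_or_le X y); auto. assert (m <= u y) by (apply Hm; auto). lra.
Qed.

Lemma phi_deriv u y : ex_derive u y -> 0 < u y ->
  is_derive (phi0 u) y (- (Derive u y) / u y).
Proof.
  intros H1 H2. unfold phi0. auto_derive. auto. replace (Derive (fun x => u x) y) with (Derive u y) by reflexivity. unfold Rdiv; ring.
Qed.

Lemma phi_facts u0 xi0 x : C2_on_right u0 xi0 -> (forall y, 0 < u0 y) -> xi0 < x ->
  (forall y, xi0 < y -> ex_derive (phi0 u0) y) /\ ex_derive (Derive (phi0 u0)) x.
Proof.
  intros HC Hp Hx. split.
  - intros y Hy. eexists. apply phi_deriv. apply (HC y Hy). auto.
  - apply ex_derive_ext_loc with (f := fun y => - (Derive u0 y) / u0 y).
    + eapply filter_imp; [|apply (loc_gt xi0 x Hx)]. intros y Hy.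
      symmetry. apply is_derive_unique. apply phi_deriv. apply (HC y Hy). auto.
    + destruct (HC x Hx) as [H1 [H2 _]].
      auto_derive. repeat split; auto. specialize (Hp x). lra.
Qed.

Lemma Rpower_inv_pow x a : 0 < a -> 0 < x -> Rpower (Rpower x (a+1)) (1/(a+1)) = x.
Proof.
  intros Ha Hx. rewrite Rpower_mult. replace ((a+1)*(1/(a+1))) with 1 by (field; lra).
  apply Rpower_1; auto.
Qed.

Lemma region_facts a c L u : 0 < a -> 0 <= c -> 2 <= L -> 0 < u ->
  u < exp (1 - Rpower (Rpower L (a+1) + c) (1/(a+1))) ->
  1 <= - ln u /\ 0 < Ap a c (- ln u) /\ L <= Psi a c (- ln u).
Proof.
  intros Ha Hc HL Hu Hlt.
  set (psiM := Rpower (Rpower L (a+1) + c) (1/(a+1))) in *.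
  assert (H1 : ln u < 1 - psiM) by (rewrite <- (ln_exp (1 - psiM)); apply ln_increasing; auto).
  assert (HLp : 0 < Rpower L (a+1)) by apply exp_pos.
  assert (HpsiL : L <= psiM).
  { rewrite <- (Rpower_inv_pow L a) at 1 by lra. unfold psiM.
    apply Rle_Rpower_l. left; apply Rdiv_lt_0_compat; lra. lra. }
  assert (Hpow : Rpower psiM (a+1) = Rpower L (a+1) + c).
  { unfold psiM. rewrite Rpower_mult. replace (1/(a+1)*(a+1)) with 1 by (field; lra).
    apply Rpower_1; lra. }
  set (p := - ln u).
  assert (HA : Rpower L (a+1) < Ap a c p).
  { unfold Ap. assert (Rpower psiM (a+1) < Rpower (1+p) (a+1)).
    { apply Rlt_Rpower_l. lra. unfold p; lra. }
    lra. }
  split; [unfold p; lra|]. split; [lra|].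
  unfold Psi. rewrite <- (Rpower_inv_pow L a) at 1 by lra.
  apply Rle_Rpower_l. left; apply Rdiv_lt_0_compat; lra. lra.
Qed.


Theorem lemma3p4
  (f f' : R -> R) (s0 K alpha r : R) (u0 : R -> R) (xi0 eps rho : R)
  (* hypotheses on f *)
  (Hf1 : C1_on_01 f f')
  (Hf0 : f 0 = 0) (Hf1' : f 1 = 0)
  (Hfpos : forall s, 0 < s < 1 -> 0 < f s)
  (Hfd1 : f' 1 < 0)
  (Hs0 : 0 < s0 < 1) (HK : 0 <= K) (Halpha : 0 < alpha) (Hr : 0 < r)
  (Hfup : forall s, 0 < s < 1 ->
     f s <= r * (s / Rpower (1 + Rabs (ln s)) alpha))
  (Hflo : forall s, 0 < s <= s0 ->
     r * (s / Rpower (1 + Rabs (ln s)) alpha) * (1 - K * s) <= f s)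
  (* hypotheses on u0 *)
  (Hu0range : forall x, 0 <= u0 x <= 1)
  (Hu0uc : unif_continuous u0)
  (Hu0pos : forall x, 0 < u0 x)
  (Hu0liminf : exists c X, 0 < c /\ forall x, x <= X -> c <= u0 x)
  (Hu0lim : is_lim u0 p_infty 0)
  (Hxi0 : 0 < xi0)
  (Hu0C2 : C2_on_right u0 xi0)
  (Hu0dec : forall x y, xi0 <= x -> x <= y -> u0 y <= u0 x)
  (Hphi1 : little_o_pinfty (Derive (phi0 u0))
             (fun x => Rpower (phi0 u0 x) (- alpha)))
  (Hphi2 : little_o_pinfty (Derive (Derive (phi0 u0))) (Derive (phi0 u0)))
  (* parameters *)
  (Heps : 0 < eps)
  (Hrho : Rmax (r - eps / 2) (3 / 4 * r) < rho /\ rho < r) :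
  exists M : R,
    Rmax (1 / (2 * zeta u0 alpha rho xi0)) (1 / (4 * s0)) <= M /\
    forall t x, 0 < t ->
      (x <= xM_fun u0 alpha rho M t ->
         Derive (fun _ : R => 1 / (4 * M)) t
         - Derive_n (fun _ : R => 1 / (4 * M)) 2 x
         - f (1 / (4 * M)) <= 0) /\
      (xM_fun u0 alpha rho M t < x ->
         ex_derive (fun s => v_right u0 alpha rho M s x) t /\
         locally x (fun y => ex_derive (fun z => v_right u0 alpha rho M t z) y) /\
         ex_derive_n (fun z => v_right u0 alpha rho M t z) 2 x /\
         Derive (fun s => v_right u0 alpha rho M s x) t
         - Derive_n (fun z => v_right u0 alpha rho M t z) 2 x
         - f (v_right u0 alpha rho M t x) <= 0).
Proof.
  destruct Hrho as [Hrho1 Hrho2].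
  assert (Hrho0 : 0 < rho) by (pose proof (Rmax_r (r - eps/2) (3/4*r)); lra).
  set (kp := (r - rho) / (8 * r)).
  assert (Hkp0 : 0 < kp) by (apply Rdiv_lt_0_compat; lra).
  set (T2a := Rpower 2 alpha).
  assert (HT2 : 0 < T2a) by apply exp_pos.
  assert (HT2' : 0 < T2a^2 + T2a) by nra.
  set (dl := Rmin 1 ((r - rho) / (4 * (T2a^2 + T2a)))).
  assert (Hdl0 : 0 < dl) by (apply Rmin_pos; [lra | apply Rdiv_lt_0_compat; lra]).
  assert (Hdl1 : dl <= 1) by apply Rmin_l.
  assert (Hdl2 : dl * (T2a^2 + T2a) <= (r - rho) / 4).
  { assert (dl <= (r - rho) / (4 * (T2a^2 + T2a))) by apply Rmin_r.
    apply Rmult_le_compat_r with (r := T2a^2 + T2a) in H; [|lra].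
    replace ((r - rho) / (4 * (T2a ^ 2 + T2a)) * (T2a ^ 2 + T2a)) with ((r - rho)/4) in H
      by (field; lra). lra. }
  destruct (Hphi1 dl Hdl0) as [X1 HX1].
  destruct (Hphi2 dl Hdl0) as [X2 HX2].
  set (X := Rmax (Rmax X1 X2) (xi0 + 1)).
  assert (HXX1 : X1 <= X) by (unfold X; eapply Rle_trans; [apply Rmax_l|apply Rmax_l]).
  assert (HXX2 : X2 <= X) by (unfold X; eapply Rle_trans; [apply Rmax_r|apply Rmax_l]).
  assert (HXxi : xi0 + 1 <= X) by (unfold X; apply Rmax_r).
  assert (Hcont := uc_cont u0 Hu0uc).
  destruct Hu0liminf as [c0 [X0 [Hc0 HX0]]].
  destruct (continuity_ab_min u0 X0 (Rmax X0 X) (Rmax_l _ _) (fun c _ => Hcont c)) as [mx [Hmx _]].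
  set (m := Rmin c0 (u0 mx)).
  assert (Hm0 : 0 < m) by (apply Rmin_pos; auto).
  assert (Hm : forall y, y <= X -> m <= u0 y).
  { intros y Hy. destruct (Rle_or_lt y X0).
    - apply Rle_trans with c0. apply Rmin_l. auto.
    - apply Rle_trans with (u0 mx). apply Rmin_r. apply Hmx. split. lra.
      apply Rle_trans with X; auto. apply Rmax_r. }
  set (M0 := Rmax (1 / (2 * zeta u0 alpha rho xi0)) (1 / (4 * s0))).
  set (M := Rmax (Rmax (Rmax M0 2) (2 / m)) (Rmax (K / (2 * kp)) (exp (alpha * ln 2 / kp)))).
  assert (HM0 : M0 <= M) by (unfold M; do 2 (eapply Rle_trans; [apply Rmax_l|]); apply Rmax_l).
  assert (HM2 : 2 <= M) by (unfold M; eapply Rle_trans; [|apply Rmax_l]; eapply Rle_trans; [|apply Rmax_l]; apply Rmax_r).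
  assert (HMm : 2 / m <= M) by (unfold M; eapply Rle_trans; [|apply Rmax_l]; apply Rmax_r).
  assert (HMK : K / (2 * kp) <= M) by (unfold M; eapply Rle_trans; [|apply Rmax_r]; apply Rmax_l).
  assert (HMe : exp (alpha * ln 2 / kp) <= M) by (unfold M; eapply Rle_trans; [|apply Rmax_r]; apply Rmax_r).
  exists M. split; [exact HM0|].
  intros t x Ht. split.
  - intros _. rewrite Derive_const, Derive_n_const.
    assert (0 < f (1 / (4*M))).
    { apply Hfpos. split. apply Rdiv_lt_0_compat; lra.
      apply Rmult_lt_reg_l with (4*M). lra. replace (4*M*(1/(4*M))) with 1 by (field; lra). lra. }
    lra.
  - intros Hx.
    set (c := rho * (alpha + 1) * t).
    assert (Hc : 0 <= c) by (unfold c; left; apply Rmult_lt_0_compat; [apply Rmult_lt_0_compat|]; lra).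
    set (L := 1 + ln (2 * M)).
    assert (Hln2M : 1 <= ln (2*M)).
    { rewrite <- ln_exp at 1. apply ln_le. apply exp_pos. pose proof exp_le_3. lra. }
    assert (HL : 2 <= L) by (unfold L; lra).
    set (psiM := Rpower (Rpower L (alpha+1) + c) (1/(alpha+1))).
    set (ct := exp (1 - psiM)).
    assert (Hct0 : 0 < ct) by apply exp_pos.
    assert (HpsiL : L <= psiM).
    { rewrite <- (Rpower_inv_pow L alpha) at 1 by lra. unfold psiM.
      apply Rle_Rpower_l. left; apply Rdiv_lt_0_compat; lra.
      assert (0 < Rpower L (alpha+1)) by apply exp_pos. lra. }
    assert (HctM : ct <= 1 / (2*M)).
    { unfold ct. replace (1 / (2*M)) with (exp (1 - L)).
      apply exp_le_mono; lra.
      unfold L. replace (1 - (1 + ln (2*M))) with (- ln (2*M)) by ring.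
      rewrite exp_Ropp, exp_ln by lra. field. lra. }
    assert (Hctm : ct < m).
    { apply Rle_lt_trans with (1 / (2*M)); auto.
      apply Rmult_lt_reg_l with (2*M). lra. replace (2*M*(1/(2*M))) with 1 by (field; lra).
      assert (2 <= M * m).
      { apply Rmult_le_compat_r with (r := m) in HMm; [|lra].
        replace (2 / m * m) with 2 in HMm by (field; lra). lra. }
      nra. }
    assert (HY : exists Y, forall y, Y <= y -> u0 y < ct).
    { apply is_lim_spec in Hu0lim. destruct (Hu0lim (mkposreal ct Hct0)) as [Y HY].
      exists (Y + 1). intros y Hy. specialize (HY y ltac:(lra)). simpl in HY.
      rewrite Rminus_0_r in HY. apply Rabs_lt_between in HY. lra. }
    assert (Hlev := level_sup u0 ct m X Hcont Hct0 Hm Hctm HY).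
    change (xM_fun u0 alpha rho M t) with (real (Lub_Rbar (fun x => u0 x = ct))) in Hx |- *.
    set (xM := real (Lub_Rbar (fun x => u0 x = ct))) in *.
    assert (Hreg : forall y, xM < y ->
      X < y /\ 1 <= phi0 u0 y /\ 0 < Ap alpha c (phi0 u0 y) /\ L <= Psi alpha c (phi0 u0 y)).
    { intros y Hy. destruct (Hlev y Hy) as [H1 H2]. split; auto.
      apply region_facts; auto. }
    destruct (Hreg x Hx) as [HxX [Hp1 [HAx HPx]]].
    assert (Hxxi : xi0 < x) by lra.
    destruct (phi_facts u0 xi0 x Hu0C2 Hu0pos Hxxi) as [Hphid Hphid2].
    assert (Hloc : locally x (fun y => ex_derive (phi0 u0) y /\ 0 < 1 + phi0 u0 y /\ 0 < Ap alpha c (phi0 u0 y))).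
    { eapply filter_imp; [|apply (loc_gt xM x Hx)]. intros y Hy.
      destruct (Hreg y Hy) as [Hy1 [Hy2 [Hy3 _]]]. split; [apply Hphid; lra|]. split; lra. }
    destruct (comp_x alpha c M (phi0 u0) x _ Halpha Hloc (Derive_correct _ _ Hphid2)) as [Lx Dx].
    assert (Htime : is_derive (fun s => v_right u0 alpha rho M s x) t
      ((1 - 2*M*Wp alpha c (phi0 u0 x)) * Wp alpha c (phi0 u0 x) * rho * Ee alpha c (phi0 u0 x)))
      by (exact (d_time alpha rho M (phi0 u0 x) t Halpha HAx)).
    assert (Dx' : is_derive (Derive (fun z => v_right u0 alpha rho M t z)) x
      (F2 alpha c M (phi0 u0 x) * (Derive (phi0 u0) x)^2 + F1 alpha c M (phi0 u0 x) * Derive (Derive (phi0 u0)) x))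
      by exact Dx.
    split; [eexists; exact Htime|].
    split. { eapply filter_imp; [|exact Lx]. intros y Hy. eexists. exact Hy. }
    split. { simpl. eexists. exact Dx'. }
    replace (Derive (fun s : R => v_right u0 alpha rho M s x) t) with
      ((1 - 2*M*Wp alpha c (phi0 u0 x)) * Wp alpha c (phi0 u0 x) * rho * Ee alpha c (phi0 u0 x))
      by (symmetry; apply is_derive_unique; exact Htime).
    change (Derive_n (fun z => v_right u0 alpha rho M t z) 2 x) with
      (Derive (Derive (fun z => v_right u0 alpha rho M t z)) x).
    replace (Derive (Derive (fun z : R => v_right u0 alpha rho M t z)) x) with
      (F2 alpha c M (phi0 u0 x) * (Derive (phi0 u0) x)^2 + F1 alpha c M (phi0 u0 x) * Derive (Derive (phi0 u0)) x)
      by (symmetry; apply is_derive_unique; exact Dx').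
    change (v_right u0 alpha rho M t x) with (g_fun M (Wp alpha c (phi0 u0 x))).
    apply (main_ineq f alpha c M (phi0 u0 x) _ _ r rho K s0 dl kp); auto.
    + apply HX1; lra.
    + apply HX2; lra.
    + assert (H4 : 1 / (4 * s0) <= M) by (eapply Rle_trans; [apply Rmax_r|exact HM0]).
      apply Rmult_le_compat_r with (r := 4 * s0) in H4; [|lra].
      replace (1 / (4 * s0) * (4 * s0)) with 1 in H4 by (field; lra).
      apply Rmult_le_reg_l with (4*M). lra. replace (4*M*(1/(4*M))) with 1 by (field; lra). lra.
    + apply Rmult_le_compat_r with (r := 2 * kp) in HMK; [|lra].
      replace (K / (2 * kp) * (2 * kp)) with K in HMK by (field; lra).
      apply Rmult_le_reg_l with (2*M). lra. replace (2*M*(K/(2*M))) with K by (field; lra). lra.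
    + assert (Hz : alpha * ln 2 / kp <= ln M).
      { rewrite <- (ln_exp (alpha * ln 2 / kp)). apply ln_le. apply exp_pos. auto. }
      assert (ln M <= ln (2*M)) by (apply ln_le; lra).
      assert (HLz : alpha * ln 2 / kp <= L) by (unfold L; lra).
      apply Rmult_le_compat_r with (r := kp) in HLz; [|lra].
      replace (alpha * ln 2 / kp * kp) with (alpha * ln 2) in HLz by (field; lra).
      fold L. apply Rmult_le_reg_l with L. lra. replace (L * (alpha * ln 2 / L)) with (alpha * ln 2) by (field; lra). lra.
Qed.
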